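(* Let $\boldsymbol{P}$ be a feasible policy (as defined in the context). If the graph $\mathcal{G}_{\boldsymbol{P}}$ of $\boldsymbol{P}$ is connected, then the graph $\mathcal{G}_{\boldsymbol{Y}}$ of $\boldsymbol{Y}_{\boldsymbol{P}}$ is also connected.
   Context: For an $n\times n$ matrix $\boldsymbol{A}=[a_{i,m}]$, its graph $\mathcal{G}_{\boldsymbol{A}}$ has vertex set $\{1,\dots,n\}$ and an edge from $m$ to $i$ iff $a_{i,m}\ne0$; it is connected if there is a path between every pair of vertices. Setting: $M\ge2$ worker nodes, undirected graph with neighborhood indicators $d_{i,m}\in\{0,1\}$. $\boldsymbol{P}=[p_{i,m}]_{M\times M}$ has rows that are probability distributions; $t_{i,m}>0$ are iteration times; $\alpha>0$, $\rho>0$. Define $\overline{t}_i=\sum_m t_{i,m}p_{i,m}d_{i,m}$, $p_i=\frac{1/\overline{t}_i}{\sum_m 1/\overline{t}_m}$, $\gamma_{i,m}=\frac{d_{i,m}+d_{m,i}}{2p_{i,m}}$ (terms with $p_{i,m}=0$ taken as $0$). $\boldsymbol{Y}_{\boldsymbol{P}}=[y_{i,m}]$ with $y_{i,i}=1-2\alpha\rho\sum_{m\ne i}p_ip_{i,m}\gamma_{i,m}+\alpha^2\rho^2\sum_{m\ne i}(p_ip_{i,m}\gamma_{i,m}^2+p_mp_{m,i}\gamma_{m,i}^2)$ and, for $m\ne i$, $y_{i,m}=\alpha\rho(p_ip_{i,m}\gamma_{i,m}+p_mp_{m,i}\gamma_{m,i})-\alpha^2\rho^2(p_ip_{i,m}\gamma_{i,m}^2+p_mp_{m,i}\gamma_{m,i}^2)$.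 $\boldsymbol{P}$ is feasible if: there is $\overline{t}$ with $\overline{t}=\frac1M\sum_m t_{i,m}p_{i,m}d_{i,m}$ for all $i$; $p_{i,m}>\alpha\rho(d_{i,m}+d_{m,i})$ for all $i\ne m$ with $d_{i,m}\ne0$; $p_{i,m}=0$ whenever $d_{i,m}=0$; and $\sum_m p_{i,m}=1$ for all $i$. *)

(* Defs.v *)
From HB Require Import structures.
From mathcomp Require Import all_boot all_order all_algebra.
Set Implicit Arguments. Unset Strict Implicit. Unset Printing Implicit Defensive.
Import Order.TTheory GRing.Theory Num.Theory.
Local Open Scope ring_scope.

Section Defs.
Variables (R : realFieldType) (M : nat).

Definition mx_edge (A : 'M[R]_M) : rel 'I_M := fun m i => A i m != 0.
Definition mx_connected (A : 'M[R]_M) : Prop :=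
  forall i j : 'I_M, connect (mx_edge A) i j.

(* d : neighbourhood indicators (bool, cast to 0/1 in R) *)
Definition dR (d : 'I_M -> 'I_M -> bool) (i m : 'I_M) : R := (d i m)%:R.

Definition tbar (P : 'M[R]_M) (t : 'I_M -> 'I_M -> R) d (i : 'I_M) : R :=
  \sum_(m < M) t i m * P i m * dR d i m.

Definition pw (P : 'M[R]_M) t d (i : 'I_M) : R :=
  (tbar P t d i)^-1 / \sum_(m < M) (tbar P t d m)^-1.

(* gamma_{i,m}, taken as 0 when p_{i,m} = 0 *)
Definition gam (P : 'M[R]_M) d (i m : 'I_M) : R :=
  if P i m == 0 then 0 else (dR d i m + dR d m i) / (2 * P i m).

Definition Ymx (P : 'M[R]_M) t d (alpha rho : R) : 'M[R]_M :=
  \matrix_(i, m)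
    if i == m then
      1 - 2 * alpha * rho *
            \sum_(k < M | k != i) pw P t d i * P i k * gam P d i k
        + alpha ^+ 2 * rho ^+ 2 *
            \sum_(k < M | k != i) (pw P t d i * P i k * (gam P d i k) ^+ 2
                                   + pw P t d k * P k i * (gam P d k i) ^+ 2)
    else
      alpha * rho * (pw P t d i * P i m * gam P d i m
                     + pw P t d m * P m i * gam P d m i)
      - alpha ^+ 2 * rho ^+ 2 * (pw P t d i * P i m * (gam P d i m) ^+ 2
                                 + pw P t d m * P m i * (gam P d m i) ^+ 2).

Definition feasible (P : 'M[R]_M) t d (alpha rho : R) : Prop :=
  [/\ exists tb : R, forall i : 'I_M,
        tb = M%:R^-1 * \sum_(m < M) t i m * P i m * dR d i m,
      forall i m : 'I_M, i != m -> d i m ->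
        alpha * rho * (dR d i m + dR d m i) < P i m,
      forall i m : 'I_M, ~~ d i m -> P i m = 0
    & forall i : 'I_M, \sum_(m < M) P i m = 1].

End Defs.

(* Main.v *)
Require Import Defs.
From HB Require Import structures.
From mathcomp Require Import all_boot all_order all_algebra.
From mathcomp Require Import ring lra.
Import Order.TTheory GRing.Theory Num.Theory.
Local Open Scope ring_scope.

Theorem lemma3 (R : realFieldType) (M : nat) (hM : (2 <= M)%N)
    (d : 'I_M -> 'I_M -> bool) (P : 'M[R]_M) (t : 'I_M -> 'I_M -> R)
    (alpha rho : R)
    (hdsym : forall i m : 'I_M, d i m = d m i)
    (hP0 : forall i m : 'I_M, 0 <= P i m)
    (ht : forall i m : 'I_M, 0 < t i m)
    (halpha : 0 < alpha) (hrho : 0 < rho)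
    (hfeas : feasible P t d alpha rho) :
  mx_connected P -> mx_connected (Ymx P t d alpha rho).
Proof.
case: hfeas => _ hlt hz hsum.
have hd : forall j k, P j k != 0 -> d j k.
  move=> j k; apply: contraR => /hz ->; by rewrite eqxx.
have tpos : forall j, 0 < tbar P t d j.
  move=> j.
  have [k Hk|H] := pickP (fun k => P j k != 0).
    rewrite /tbar (bigD1 k) //=.
    have Hpos : 0 < P j k by rewrite lt0r Hk hP0.
    rewrite /dR (hd _ _ Hk) mulr1.
    apply: ltr_pwDl; first by apply: mulr_gt0.
    apply: sumr_ge0 => i _; apply: mulr_ge0; last by rewrite /dR ler0n.
    apply: mulr_ge0 => //; exact: ltW.
  exfalso; move: (hsum j); rewrite big1 => [/eqP|i _].
    by rewrite eq_sym oner_eq0.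
  by move: (H i) => /= /negbFE /eqP.
have pwpos : forall j, 0 < pw P t d j.
  move=> j; rewrite /pw; apply: divr_gt0; first by rewrite invr_gt0.
  rewrite (bigD1 j) //=; apply: ltr_pwDl; first by rewrite invr_gt0.
  by apply: sumr_ge0 => i _; rewrite invr_ge0 ltW.
have gamE : forall j k, j != k -> P j k != 0 ->
    gam P d j k = (P j k)^-1 /\ alpha * rho < P j k.
  move=> j k jk Hk; have djk := hd _ _ Hk.
  have dkj : d k j by rewrite hdsym.
  move: (hlt _ _ jk djk); rewrite /gam (negbTE Hk) /dR djk dkj => h.
  split; first by rewrite /= ; field; rewrite Hk ?pnatr_eq0.
  rewrite /= in h; have : 0 < alpha * rho by apply: mulr_gt0.
  lra.
have gam_ge0 : forall j k, j != k -> 0 <= gam P d j k /\ alpha * rho * gam P d j k < 1.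
  move=> j k jk; case: (eqVneq (P j k) 0) => Hk.
    by rewrite /gam Hk eqxx mulr0 ltr01 lexx.
  have [-> h] := gamE _ _ jk Hk.
  have Hpos : 0 < P j k by rewrite lt0r Hk hP0.
  split; first by rewrite invr_ge0 ltW.
  by rewrite -/(_ / _) ltr_pdivrMr // mul1r.
move=> Hc i j.
apply: connect_sub (Hc i j) => m k.
rewrite /mx_edge => Hk.
case: (eqVneq m k) => [->|mk]; first exact: connect0.
have km : k != m by rewrite eq_sym.
apply: connect1; rewrite /mx_edge mxE (negbTE km).
set a := pw P t d k * P k m * gam P d k m.
set b := pw P t d m * P m k * gam P d m k.
have -> : alpha * rho * (a + b) - alpha ^+ 2 * rho ^+ 2 *
  (pw P t d k * P k m * gam P d k m ^+ 2 + pw P t d m * P m k * gam P d m k ^+ 2)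
  = alpha * rho * (a * (1 - alpha * rho * gam P d k m) + b * (1 - alpha * rho * gam P d m k)).
  rewrite /a /b; ring.
apply: lt0r_neq0.
apply: mulr_gt0; first exact: mulr_gt0.
have [g1 g1'] := gam_ge0 _ _ km.
have [g2 g2'] := gam_ge0 _ _ mk.
have ha : 0 < a * (1 - alpha * rho * gam P d k m).
  apply: mulr_gt0; last by rewrite subr_gt0.
  have Hpos : 0 < P k m by rewrite lt0r Hk hP0.
  have [gE _] := gamE _ _ km Hk; rewrite /a gE.
  apply: mulr_gt0; last by rewrite invr_gt0.
  exact: mulr_gt0.
have hb : 0 <= b * (1 - alpha * rho * gam P d m k).
  apply: mulr_ge0; last by rewrite subr_ge0 ltW.
  rewrite /b; apply: mulr_ge0 => //; apply: mulr_ge0 => //; exact: ltW.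
lra.
Qed.
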